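(* Let $(X_k^\diamond,U_k^\diamond)_{k\ge0}$ be the trajectory of $X_{k+1}=AX_k+BU_k+EW_k$, $X_0=X_{\mathrm{ini}}$, under $U_k^\diamond=KX_k^\diamond+F\,\mathbb E[W]$, and let $(\bar X_k^\diamond,\bar U_k^\diamond)_{k\ge0}$ be a corresponding stationary trajectory with law $(\mu_X^\diamond,\mu_U^\diamond)$. Then there exist constants $\beta>0$ and $p\in[0,1)$ such that for all $k\ge0$ $$\big\|(X_k^\diamond,U_k^\diamond)-(\bar X_k^\diamond,\bar U_k^\diamond)\big\|\le\beta p^k,$$ where $\|\cdot\|$ is the $\mathcal L^2$-norm $\|Z\|=\sqrt{\mathbb E[Z^\top Z]}$. Consequently, for every $\varepsilon>0$, $$\mathbb P\Big(\limsup_{k\to\infty}\big\{\|(X_k^\diamond,U_k^\diamond)-(\bar X_k^\diamond,\bar U_k^\diamond)\|_2\ge\varepsilon\big\}\Big)=0,$$ where $\|\cdot\|_2$ is the Euclidean norm applied pathwise.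
   Context: $A\in\mathbb R^{n_x\times n_x}$, $B\in\mathbb R^{n_x\times n_u}$, $E\in\mathbb R^{n_x\times n_w}$; $Q\succeq0$, $R\succ0$; $(A,B)$ stabilizable, $(A,Q^{1/2})$ detectable. $X_{\mathrm{ini}}$ square integrable; $W_0,W_1,\dots$ i.i.d. square integrable, independent of $X_{\mathrm{ini}}$, distributed as $W$. Stationary quantities: $P$ stabilizing positive semidefinite solution of $P=Q+A^\top(P-PB(R+B^\top PB)^{-1}B^\top P)A$; $K=-(R+B^\top PB)^{-1}B^\top PA$; $\tilde A=A+BK$ (Schur stable); $G$ the unique solution of $G=\tilde A^\top(PE+G)$; $F=-(R+B^\top PB)^{-1}B^\top(PE+G)$; $\tilde F=BF+E$. Let $X_\infty:=(I-\tilde A)^{-1}\tilde F\mathbb E[W]+\sum_{j=0}^\infty\tilde A^jE(W'_j-\mathbb E[W])$ for i.i.d. copies $W'_j$ of $W$, and let $(\mu_X^\diamond,\mu_U^\diamond)$ denote the joint law of $(X_\infty,KX_\infty+F\mathbb E[W])$. A corresponding stationary trajectory with law $(\mu_X^\diamond,\mu_U^\diamond)$ is a sequence of square-integrable $(\bar X_k,\bar U_k)$ with $\bar X_{k+1}=A\bar X_k+B\bar U_k+EW_k$ (driven by the same disturbances $W_k$), $\bar X_0=\bar X_{\mathrm{ini}}$ for some square-integrable $\bar X_{\mathrm{ini}}$, and $(\bar X_k,\bar U_k)$ having joint law $(\mu_X^\diamond,\mu_U^\diamond)$ for all $k$. *)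

(* Defs.v *)
From HB Require Import structures.
From mathcomp Require Import all_boot all_order all_algebra.
From mathcomp Require Import all_classical all_reals all_analysis.
From mathcomp Require Import complex.

Set Implicit Arguments.
Unset Strict Implicit.
Unset Printing Implicit Defensive.

Import Order.TTheory GRing.Theory Num.Theory numFieldNormedType.Exports.
Local Open Scope classical_set_scope.
Local Open Scope ring_scope.

Definition schur_stable (R : realType) (n : nat) (M : 'M[R]_n) : Prop :=
  forall z : R[i], eigenvalue (map_mx (fun x : R => Complex x 0) M) z -> `|z| < 1.

Definition stabilizable (R : realType) (n m : nat) (A : 'M[R]_n) (B : 'M[R]_(n, m)) : Prop :=
  exists L : 'M[R]_(m, n), schur_stable (A + B *m L).

Definition detectable (R : realType) (n p : nat) (A : 'M[R]_n) (C : 'M[R]_(p, n)) : Prop :=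
  exists L : 'M[R]_(n, p), schur_stable (A + L *m C).

Definition psd (R : realType) (n : nat) (M : 'M[R]_n) : Prop :=
  M^T = M /\ forall v : 'cV[R]_n, 0 <= (v^T *m M *m v) ord0 ord0.

Definition pd (R : realType) (n : nat) (M : 'M[R]_n) : Prop :=
  M^T = M /\ forall v : 'cV[R]_n, v != 0 -> 0 < (v^T *m M *m v) ord0 ord0.

Definition sqnorm (R : realType) (n : nat) (v : 'cV[R]_n) : R := (v^T *m v) ord0 ord0.

Definition rect_cV (R : realType) (n : nat) : set (set 'cV[R]_n) :=
  [set S | exists Bs : 'I_n -> set R,
     (forall i, measurable (Bs i)) /\ S = [set v | forall i, Bs i ((v : 'cV[R]_n) i ord0)]].

Definition borel_cV (R : realType) (n : nat) : set (set 'cV[R]_n) :=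
  smallest (sigma_algebra setT) (@rect_cV R n).

Definition rv_meas d (T : measurableType d) (R : realType) (n : nat)
  (Y : T -> 'cV[R]_n) : Prop :=
  forall S, @borel_cV R n S -> measurable (Y @^-1` S).

Definition sq_int d (T : measurableType d) (R : realType) (P : probability T R)
  (n : nat) (Y : T -> 'cV[R]_n) : Prop :=
  rv_meas Y /\ forall i, P.-integrable setT (fun t => ((Y t i ord0) ^+ 2)%:E).

Definition sigma_rv d (T : measurableType d) (R : realType) (n : nat)
  (Y : T -> 'cV[R]_n) : set (set T) :=
  [set Y @^-1` S | S in @borel_cV R n].

Definition mutually_indep d (T : measurableType d) (R : realType)
  (P : probability T R) (I : eqType) (F : I -> set (set T)) : Prop :=
  forall (J : seq I) (A : I -> set T), uniq J ->
    (forall j, j \in J -> F j (A j)) ->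
    P (\big[setI/setT]_(j <- J) A j) = (\prod_(j <- J) P (A j))%E.

Definition same_law d1 (T1 : measurableType d1) d2 (T2 : measurableType d2)
  (R : realType) (P1 : probability T1 R) (P2 : probability T2 R) (n : nat)
  (Y1 : T1 -> 'cV[R]_n) (Y2 : T2 -> 'cV[R]_n) : Prop :=
  forall S, @borel_cV R n S -> P1 (Y1 @^-1` S) = P2 (Y2 @^-1` S).

Definition mean d (T : measurableType d) (R : realType) (P : probability T R)
  (n : nat) (Y : T -> 'cV[R]_n) : 'cV[R]_n :=
  \col_i fine ('E_P[fun t => Y t i ord0]).

Definition gainK (R : realType) (nx nu : nat) (A : 'M[R]_nx) (B : 'M[R]_(nx, nu))
  (Rm : 'M[R]_nu) (P : 'M[R]_nx) : 'M[R]_(nu, nx) :=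
  - (invmx (Rm + B^T *m P *m B) *m B^T *m P *m A).

Definition gainF (R : realType) (nx nu nw : nat) (B : 'M[R]_(nx, nu)) (E : 'M[R]_(nx, nw))
  (Rm : 'M[R]_nu) (P : 'M[R]_nx) (G : 'M[R]_(nx, nw)) : 'M[R]_(nu, nw) :=
  - (invmx (Rm + B^T *m P *m B) *m B^T *m (P *m E + G)).

Definition limsup_set (T : Type) (Ev : nat -> set T) : set T :=
  \bigcap_(n in [set: nat]) \bigcup_(k in [set k | (n <= k)%N]) Ev k.

(* Main.v *)
From HB Require Import structures.
From mathcomp Require Import all_boot all_order all_algebra.
From mathcomp Require Import all_classical all_reals all_analysis.
From mathcomp Require Import complex measurable_realfun.
From mathcomp Require Import ring lra.
Require Import Defs.
Set Implicit Arguments.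
Unset Strict Implicit.
Unset Printing Implicit Defensive.
Import Order.TTheory GRing.Theory Num.Theory numFieldNormedType.Exports.
Local Open Scope classical_set_scope.
Local Open Scope ring_scope.
Import ComplexField.Normc.

Lemma normc_ge0 (R : rcfType) (x : R[i]) : 0 <= normc x.
Proof. by case: x => a b; rewrite /normc sqrtr_ge0. Qed.
Lemma recur (R : realType) (m : nat) (M : 'M[R[i]]_m.+1) (r : R) (s : seq R[i]) :
  0 <= r -> (forall z, z \in s -> normc z < r) ->
  forall V : 'M[R[i]]_(m.+1), horner_mx M (\prod_(z <- s) ('X - z%:P)) *m V = 0 ->
  forall i j, exists c : R, forall k, normc ((M ^+ k *m V) i j) <= c * r ^+ k.
Proof.
move=> r0; elim: s => [|l s IH] hs V hV i j.
  exists 0 => k; rewrite big_nil rmorph1 mul1mx in hV.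
  by rewrite hV mulmx0 mxE normc0 mul0r.
have hl : normc l < r by apply: hs; rewrite inE eqxx.
set V' := (M - l%:M) *m V.
have hV' : horner_mx M (\prod_(z <- s) ('X - z%:P)) *m V' = 0.
  have hc : horner_mx M (\prod_(z <- s) ('X - z%:P)) * horner_mx M ('X - l%:P)
          = horner_mx M (('X - l%:P) * \prod_(z <- s) ('X - z%:P)).
    by rewrite mulrC rmorphM.
  rewrite /V'; have -> : M - l%:M = horner_mx M ('X - l%:P) by rewrite rmorphB /= horner_mx_X horner_mx_C.
  rewrite big_cons in hV.
  by rewrite mulmxA; move: hc; rewrite /GRing.mul /= => ->.
have hs' : forall z, z \in s -> normc z < r by move=> z hz; apply: hs; rewrite inE hz orbT.
have [c' hc'] := IH hs' V' hV' i j.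
have c'0 : 0 <= c'.
  by have := hc' 0%N; rewrite expr0 mulr1; apply: le_trans; exact: normc_ge0.
set A := normc (V i j) + c' / (r - normc l).
have rl : 0 < r - normc l by rewrite subr_gt0.
exists A; elim=> [|k IHk].
  by rewrite expr0 mulr1 mul1mx /A lerDl divr_ge0 // ltW.
have eq1 : (M ^+ k.+1 *m V) i j = l * (M ^+ k *m V) i j + (M ^+ k *m V') i j.
  have e : M ^+ k *m V' = M ^+ k.+1 *m V - l *: (M ^+ k *m V).
    rewrite /V' mulmxBl mulmxBr mulmxA mul_scalar_mx scalemxAr; congr (_ - _).
    by rewrite exprSr.
  by rewrite e !mxE; ring.
rewrite eq1; apply: (le_trans (le_normcD _ _)); rewrite normcM.
apply: (@le_trans _ _ (normc l * (A * r ^+ k) + c' * r ^+ k)).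
  apply: lerD => //; apply: ler_wpM2l => //; exact: normc_ge0.
have key : normc l * A + c' <= A * r.
  have h1 : (r - normc l) * (c' / (r - normc l)) = c'.
    by rewrite mulrC -mulrA mulVf ?gt_eqF // mulr1.
  have h2 : 0 <= normc (V i j) := normc_ge0 _.
  rewrite /A; nra.
have rk : 0 <= r ^+ k := exprn_ge0 _ r0.
rewrite exprS; nra.
Qed.

Lemma radius_seq (R : realType) (s : seq R[i]) :
  (forall z, z \in s -> normc z < 1) ->
  exists r : R, 0 <= r < 1 /\ forall z, z \in s -> normc z < r.
Proof.
elim: s => [_|z s IH hs]; first by exists 0; split => //; rewrite lexx ltr01.
have [|r [/andP [r0 r1] hr]] := IH; first by move=> x hx; apply: hs; rewrite inE hx orbT.
have hz : normc z < 1 by apply: hs; rewrite inE eqxx.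
have hz0 := normc_ge0 z.
exists (Num.max r ((1 + normc z) / 2)); split.
  rewrite le_max r0 /= gt_max r1 /=; lra.
move=> x; rewrite inE => /orP [/eqP ->|hx]; rewrite lt_max.
  by apply/orP; right; lra.
by rewrite hr.
Qed.

Lemma sum_ge_term (R : realType) (I : finType) (F : I -> R) (i : I) :
  (forall j, 0 <= F j) -> F i <= \sum_j F j.
Proof. by move=> h; rewrite (bigD1 i) //= lerDl sumr_ge0. Qed.

Lemma spec_bound (R : realType) (n : nat) (At : 'M[R]_n) : schur_stable At ->
  exists c r : R, 0 <= r < 1 /\ forall k i j, `|(At ^+ k) i j| <= c * r ^+ k.
Proof.
case: n At => [|m] At hs; first by exists 0, 0; split; [rewrite lexx ltr01|move=> k []].
set M := map_mx (real_complex R) At.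
have [s hp] := closed_field_poly_normal (char_poly M).
rewrite (monicP (char_poly_monic M)) scale1r in hp.
have hs1 : forall z, z \in s -> normc z < 1.
  move=> z hz; have : eigenvalue M z by rewrite eigenvalue_root_char hp root_prod_XsubC.
  move/hs; case: z {hz} => a b; rewrite normc_def ltcE /= => /andP [_ h].
  by rewrite /normc.
have [r [/andP [r0 r1] hr]] := @radius_seq _ _ hs1.
have hV : horner_mx M (\prod_(z <- s) ('X - z%:P)) *m 1%:M = 0.
  by rewrite -hp Cayley_Hamilton mul0mx.
have hij := @recur _ _ M r s r0 hr _ hV.
have hpow : forall k, M ^+ k = map_mx (real_complex R) (At ^+ k).
  elim=> [|k IH]; first by rewrite !expr0 /M -[1]/(1%:M) map_mx1.
  by rewrite !exprS IH /M map_mxM.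
have hnc : forall x : R, normc (Complex x 0) = `|x|.
  by move=> x; rewrite /normc expr0n addr0 sqrtr_sqr.
have hij' : forall ij : 'I_m.+1 * 'I_m.+1, exists c : R, forall k,
    `|(At ^+ k) ij.1 ij.2| <= c * r ^+ k.
  move=> [i j]; have [c hc] := hij i j; exists c => k.
  by have := hc k; rewrite mulmx1 hpow mxE hnc.
have [f hf] := choice hij'.
exists (\sum_ij `|f ij|), r; split; first by rewrite r0 r1.
move=> k i j; apply: (le_trans (hf (i, j) k)); apply: ler_wpM2r; first exact: exprn_ge0.
apply: (le_trans (ler_norm _)); exact: (@sum_ge_term _ _ (fun ij => `|f ij|) (i, j) (fun _ => normr_ge0 _)).
Qed.

Lemma sqnormE (R : realType) n (v : 'cV[R]_n) : sqnorm v = \sum_i v i ord0 ^+ 2.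
Proof. by rewrite /sqnorm mxE; apply: eq_bigr => i _; rewrite mxE. Qed.

Lemma sqnorm_ge0 (R : realType) n (v : 'cV[R]_n) : 0 <= sqnorm v.
Proof. by rewrite sqnormE sumr_ge0 // => i _; exact: sqr_ge0. Qed.

Lemma sqnorm_eq0 (R : realType) n (v : 'cV[R]_n) : sqnorm v = 0 -> v = 0.
Proof.
rewrite sqnormE => /eqP; rewrite psumr_eq0; last by move=> i _; exact: sqr_ge0.
move/allP => h; apply/matrixP => i j; rewrite (ord1 j) mxE.
by have := h i (mem_index_enum i); rewrite sqrf_eq0 => /eqP.
Qed.

Lemma sqnorm0 (R : realType) n : sqnorm (0 : 'cV[R]_n) = 0.
Proof. by rewrite sqnormE big1 // => i _; rewrite mxE expr0n. Qed.

Lemma sqnorm_col (R : realType) m n (a : 'cV[R]_m) (b : 'cV[R]_n) :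
  sqnorm (col_mx a b) = sqnorm a + sqnorm b.
Proof.
rewrite !sqnormE big_split_ord /=; congr (_ + _); apply: eq_bigr => i _.
  by rewrite col_mxEu.
by rewrite col_mxEd.
Qed.

Lemma coord_le (R : realType) n (v : 'cV[R]_n) j :
  `|v j ord0| <= Num.sqrt (sqnorm v).
Proof.
rewrite -(sqrtr_sqr (v j ord0)) ler_sqrt ?sqnorm_ge0 // sqnormE.
exact: (@sum_ge_term _ _ (fun i => v i ord0 ^+ 2) j (fun i => sqr_ge0 _)).
Qed.

Lemma sqnorm_mul (R : realType) m n (M : 'M[R]_(m, n)) (a : R) (v : 'cV[R]_n) :
  (forall i j, `|M i j| <= a) ->
  sqnorm (M *m v) <= (m * n ^ 2)%:R * a ^+ 2 * sqnorm v.
Proof.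
move=> hM; set s := Num.sqrt (sqnorm v).
have s0 : 0 <= s := sqrtr_ge0 _.
have hs2 : s ^+ 2 = sqnorm v by rewrite sqr_sqrtr ?sqnorm_ge0.
have hi : forall i, `|(M *m v) i ord0| <= n%:R * a * s.
  move=> i; rewrite mxE; apply: (le_trans (ler_norm_sum _ _ _)).
  apply: (@le_trans _ _ (\sum_(j < n) a * s)).
    apply: ler_sum => j _; rewrite normrM; apply: ler_pM => //.
    exact: coord_le.
  by rewrite sumr_const card_ord -mulrA mulr_natl.
rewrite sqnormE; apply: (@le_trans _ _ (\sum_(i < m) (n%:R * a * s) ^+ 2)).
  apply: ler_sum => i _; rewrite -real_normK ?num_real //.
  have := hi i; have := normr_ge0 ((M *m v) i ord0); nra.
rewrite sumr_const card_ord -mulr_natl natrM natrX -hs2 le_eqVlt; apply/orP; left; apply/eqP; ring.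
Qed.

Definition cmeas d (T : measurableType d) (R : realType) n (Y : T -> 'cV[R]_n) :=
  forall i, measurable_fun setT (fun t => Y t i ord0).

Lemma rv_cmeas d (T : measurableType d) (R : realType) n (Y : T -> 'cV[R]_n) :
  rv_meas Y -> cmeas Y.
Proof.
move=> hY i _ B mB; rewrite setTI.
set S := [set v : 'cV[R]_n | forall j, (if j == i then B else setT) (v j ord0)].
have hS : borel_cV S.
  apply: sub_gen_smallest; exists (fun j => if j == i then B else setT); split => //.
  by move=> j; case: (j == i).
have := hY S hS; congr measurable; apply/seteqP; split => t /=.
  by move=> /(_ i); rewrite eqxx.
by move=> hB j; case: eqP => [->|].
Qed.

Lemma cmeas_cst d (T : measurableType d) (R : realType) n (c : 'cV[R]_n) :
  cmeas (fun _ : T => c).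
Proof. by move=> i; exact: measurable_cst. Qed.

Lemma cmeas_add d (T : measurableType d) (R : realType) n (Y Z : T -> 'cV[R]_n) :
  cmeas Y -> cmeas Z -> cmeas (fun t => Y t + Z t).
Proof.
move=> hY hZ i; rewrite (_ : (fun t => _) = (fun t => Y t i ord0) \+ (fun t => Z t i ord0)).
  exact: measurable_funD.
by apply: funext => t; rewrite mxE.
Qed.

Lemma cmeas_sub d (T : measurableType d) (R : realType) n (Y Z : T -> 'cV[R]_n) :
  cmeas Y -> cmeas Z -> cmeas (fun t => Y t - Z t).
Proof.
move=> hY hZ i; rewrite (_ : (fun t => _) = (fun t => Y t i ord0) \- (fun t => Z t i ord0)).
  exact: measurable_funB.
by apply: funext => t; rewrite !mxE.
Qed.

Lemma cmeas_mul d (T : measurableType d) (R : realType) m n (L : 'M[R]_(m, n))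
  (Y : T -> 'cV[R]_n) : cmeas Y -> cmeas (fun t => L *m Y t).
Proof.
move=> hY i.
rewrite (_ : (fun t => _) = (fun t => \sum_(j <- index_enum 'I_n) (fun j t => L i j * Y t j ord0) j t)).
  apply: measurable_sum => j; rewrite (_ : (fun t => _) = (cst (L i j)) \* (fun t => Y t j ord0)) //.
  exact: measurable_funM.
by apply: funext => t; rewrite mxE.
Qed.

Lemma cmeas_col d (T : measurableType d) (R : realType) m n (Y : T -> 'cV[R]_m)
  (Z : T -> 'cV[R]_n) : cmeas Y -> cmeas Z -> cmeas (fun t => col_mx (Y t) (Z t)).
Proof.
move=> hY hZ i; have hi : i = unsplit (fintype.split i) by rewrite splitK.
rewrite hi; case: (fintype.split i) => j /=.
  by under eq_fun do rewrite col_mxEu; exact: hY.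
by under eq_fun do rewrite col_mxEd; exact: hZ.
Qed.

Lemma cmeas_usub d (T : measurableType d) (R : realType) m n (Y : T -> 'cV[R]_(m + n)) :
  cmeas Y -> cmeas (fun t => usubmx (Y t)).
Proof. by move=> hY i; under eq_fun do rewrite mxE; exact: hY. Qed.

Lemma cmeas_dsub d (T : measurableType d) (R : realType) m n (Y : T -> 'cV[R]_(m + n)) :
  cmeas Y -> cmeas (fun t => dsubmx (Y t)).
Proof. by move=> hY i; under eq_fun do rewrite mxE; exact: hY. Qed.

Lemma meas_sqnorm d (T : measurableType d) (R : realType) n (Y : T -> 'cV[R]_n) :
  cmeas Y -> measurable_fun setT (fun t => sqnorm (Y t)).
Proof.
move=> hY; under eq_fun do rewrite sqnormE.
apply: measurable_sum => j.
rewrite (_ : (fun t => _) = (fun t => Y t j ord0) \* (fun t => Y t j ord0)).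
  exact: measurable_funM.
by apply: funext => t; rewrite expr2.
Qed.

Definition cvec (R : realType) n := 'cV[R]_n.
HB.instance Definition _ (R : realType) n := Choice.on (cvec R n).
HB.instance Definition _ (R : realType) n := isPointed.Build (cvec R n) 0.
Definition CV (R : realType) n := g_sigma_algebraType (@rect_cV R n : set (set (cvec R n))).

Lemma cmeas_id (R : realType) n : cmeas (fun v : CV R n => (v : 'cV[R]_n)).
Proof.
apply: rv_cmeas => S hS; rewrite preimage_id; exact: hS.
Qed.

Lemma sqnorm_sub_le (R : realType) n (a b : 'cV[R]_n) :
  sqnorm (a - b) <= 2 * sqnorm a + 2 * sqnorm b.
Proof.
rewrite !sqnormE !mulr_sumr -big_split /=; apply: ler_sum => i _.
rewrite !mxE; have := sqr_ge0 (a i ord0 + b i ord0); nra.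
Qed.

Lemma sq_int_sqnorm d (T : measurableType d) (R : realType) (P : probability T R) n
  (Y : T -> 'cV[R]_n) : sq_int P Y -> P.-integrable setT (fun t => (sqnorm (Y t))%:E).
Proof.
move=> [_ hY]; under eq_fun do rewrite sqnormE -sumEFin.
exact: integrable_sum.
Qed.

Lemma mat_diff (R : realType) nx nu (A : 'M[R]_nx) (B : 'M[R]_(nx, nu)) (K : 'M[R]_(nu, nx))
  (c : 'cV[R]_nu) (x y e : 'cV[R]_nx) :
  A *m x + B *m (K *m x + c) + e - (A *m y + B *m (K *m y + c) + e) = (A + B *m K) *m (x - y).
Proof.
rewrite mulmxDl !mulmxDr ?mulmxN !mulmxA.
apply/matrixP => i j; rewrite !mxE; ring.
Qed.

Lemma mat_diffU (R : realType) nx nu (K : 'M[R]_(nu, nx)) (c : 'cV[R]_nu) (x y : 'cV[R]_nx) :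
  K *m x + c - (K *m y + c) = K *m (x - y).
Proof. rewrite mulmxBr; apply/matrixP => i j; rewrite !mxE; ring. Qed.

Lemma meas_ge_sqrt d (T : measurableType d) (R : realType) (g : T -> R) (eps : R) :
  measurable_fun setT g -> measurable [set t | eps <= Num.sqrt (g t)].
Proof.
move=> hg.
have hm : measurable_fun setT (Num.sqrt \o g).
  apply: measurableT_comp => //; exact: continuous_measurable_fun (@sqrt_continuous R).
have := hm measurableT _ (measurable_itv `[eps, +oo[); rewrite setTI.
congr measurable; apply/seteqP; split => t /=; by rewrite in_itv /= andbT.
Qed.

Theorem lemma5
  (R : realType) (nx nu nw : nat)
  (A : 'M[R]_nx) (B : 'M[R]_(nx, nu)) (E : 'M[R]_(nx, nw))
  (Q : 'M[R]_nx) (Rm : 'M[R]_nu) (Qh : 'M[R]_nx)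
  (Pr : 'M[R]_nx) (G : 'M[R]_(nx, nw))
  (* standing assumptions *)
  (hQ : psd Q) (hRm : pd Rm) (hAB : stabilizable A B)
  (hQh : psd Qh) (hQhQ : Qh *m Qh = Q) (hAQ : detectable A Qh)
  (* Pr: the stabilizing positive semidefinite solution of the DARE *)
  (hPr_psd : psd Pr)
  (hPr_dare : Pr = Q + A^T *m (Pr - Pr *m B *m invmx (Rm + B^T *m Pr *m B)
                                    *m B^T *m Pr) *m A)
  (hPr_stab : schur_stable (A + B *m gainK A B Rm Pr))
  (* G: solution of G = Atilde^T (Pr E + G) *)
  (hG : G = (A + B *m gainK A B Rm Pr)^T *m (Pr *m E + G))
  (* probability space, initial state and disturbances *)
  (d : measure_display) (T : measurableType d) (P : probability T R)
  (Xini : T -> 'cV[R]_nx) (W : nat -> T -> 'cV[R]_nw)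
  (hXini : sq_int P Xini)
  (hW : forall k, sq_int P (W k))
  (hWid : forall k, same_law P P (W k) (W 0%N))
  (hWind : mutually_indep P (fun o : option nat =>
             match o with None => sigma_rv Xini | Some k => sigma_rv (W k) end))
  (* closed-loop trajectory under U = K X + F E[W] *)
  (Xd : nat -> T -> 'cV[R]_nx) (Ud : nat -> T -> 'cV[R]_nu)
  (hXd0 : Xd 0%N = Xini)
  (hUd : forall k t, Ud k t = gainK A B Rm Pr *m Xd k t
                               + gainF B E Rm Pr G *m mean P (W 0%N))
  (hXd : forall k t, Xd k.+1 t = A *m Xd k t + B *m Ud k t + E *m W k t)
  (* corresponding stationary trajectory *)
  (Xb : nat -> T -> 'cV[R]_nx) (Ub : nat -> T -> 'cV[R]_nu)
  (hXb : forall k t, Xb k.+1 t = A *m Xb k t + B *m Ub k t + E *m W k t)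
  (hXbsq : forall k, sq_int P (Xb k))
  (hUbsq : forall k, sq_int P (Ub k))
  (hstat :
     let K := gainK A B Rm Pr in
     let F := gainF B E Rm Pr G in
     let At : 'M[R]_nx := A + B *m K in
     let Ft : 'M[R]_(nx, nw) := B *m F + E in
     let EW := mean P (W 0%N) in
     exists (d' : measure_display) (T' : measurableType d')
            (P' : probability T' R) (W' : nat -> T' -> 'cV[R]_nw)
            (Xinf : T' -> 'cV[R]_nx),
       (forall j, sq_int P' (W' j)) /\
       (forall j, same_law P' P (W' j) (W 0%N)) /\
       mutually_indep P' (fun j : nat => sigma_rv (W' j)) /\
       {ae P', forall t, forall i,
          ((fun n : nat => ((invmx (1%:M - At) *m Ft *m EW
              + \sum_(j < n) At ^+ j *m E *m (W' j t - EW)) i ord0 : R))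
          @ \oo --> Xinf t i ord0)} /\
       forall k, same_law P P'
         (fun t => col_mx (Xb k t) (Ub k t))
         (fun t => col_mx (Xinf t) (K *m Xinf t + F *m EW))) :
  (exists beta p : R, 0 < beta /\ 0 <= p < 1 /\
     forall k : nat,
       (\int[P]_t (sqnorm (col_mx (Xd k t - Xb k t) (Ud k t - Ub k t)))%:E
          <= ((beta * p ^+ k) ^+ 2)%:E)%E) /\
  (forall eps : R, 0 < eps ->
     P (limsup_set (fun k => [set t | eps <= Num.sqrt
          (sqnorm (col_mx (Xd k t - Xb k t) (Ud k t - Ub k t)))])) = 0%E).
Proof.
have [d' [T' [P' [W' [Xinf [_ [_ [_ [_ hlaw]]]]]]]]] := hstat.
pose K := gainK A B Rm Pr.
pose c := gainF B E Rm Pr G *m mean P (W 0%N).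
pose At := A + B *m K.
have mX0 := rv_cmeas hXini.1.
have mW : forall k, cmeas (W k) by move=> k; exact: rv_cmeas (hW k).1.
have mXb : forall k, cmeas (Xb k) by move=> k; exact: rv_cmeas (hXbsq k).1.
have mUb : forall k, cmeas (Ub k) by move=> k; exact: rv_cmeas (hUbsq k).1.
have eUd : forall k, Ud k = fun t => K *m Xd k t + c.
  by move=> k; apply: funext => t; exact: hUd.
have eXd : forall k, Xd k.+1 = fun t => A *m Xd k t + B *m Ud k t + E *m W k t.
  by move=> k; apply: funext => t; exact: hXd.
have mXd : forall k, cmeas (Xd k).
  elim=> [|k IH]; first by rewrite hXd0.
  rewrite eXd; apply: cmeas_add; first apply: cmeas_add.
  - exact: cmeas_mul.
  - apply: cmeas_mul; rewrite eUd; apply: cmeas_add; [exact: cmeas_mul|exact: cmeas_cst].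
  - exact: cmeas_mul.
have mUd : forall k, cmeas (Ud k).
  by move=> k; rewrite eUd; apply: cmeas_add; [exact: cmeas_mul|exact: cmeas_cst].
pose N k := [set t | Ub k t = K *m Xb k t + c].
have mN : forall k, measurable (N k).
  move=> k.
  have := meas_sqnorm (cmeas_sub (mUb k) (cmeas_add (cmeas_mul K (mXb k)) (cmeas_cst c)))
    measurableT (measurable_set1 0).
  rewrite setTI; congr measurable; apply/seteqP; split => t /=.
    by move=> /sqnorm_eq0/eqP; rewrite subr_eq0 => /eqP.
  by rewrite /N /= => ->; rewrite subrr sqnorm0.
have PN : forall k, P (N k) = 1%E.
  move=> k.
  pose S : set 'cV[R]_(nx + nu) := [set v | sqnorm (dsubmx v - (K *m usubmx v + c)) = 0].
  have hS : borel_cV S.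
    have hm := meas_sqnorm (cmeas_sub (cmeas_dsub (@cmeas_id R (nx + nu)))
       (cmeas_add (cmeas_mul K (cmeas_usub (@cmeas_id R (nx + nu)))) (cmeas_cst c))).
    have := hm measurableT _ (measurable_set1 0); rewrite setTI => h; exact: h.
  have := hlaw k S hS.
  have -> : (fun t => col_mx (Xinf t) (K *m Xinf t + gainF B E Rm Pr G *m mean P (W 0%N)))
      @^-1` S = setT.
    by apply/seteqP; split => t //= _; rewrite /S /= col_mxKd col_mxKu subrr sqnorm0.
  rewrite probability_setT => <-; congr (P _); apply/seteqP; split => t /=.
    by rewrite /N /S /= => ->; rewrite col_mxKd col_mxKu subrr sqnorm0.
  by rewrite /S /= col_mxKd col_mxKu => /sqnorm_eq0/eqP; rewrite subr_eq0 => /eqP.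
have hae : \forall t \ae P, forall k, N k t.
  apply: ae_foralln => k; exists (~` N k); split => //.
  - exact: measurableC.
  - have PC : P (~` N k) = 0%E by rewrite probability_setC // PN subee.
    exact: PC.
have hpath : forall t, (forall k, N k t) ->
    forall k, Xd k t - Xb k t = At ^+ k *m (Xini t - Xb 0%N t).
  move=> t hN; elim=> [|k IH]; first by rewrite expr0 mul1mx hXd0.
  by rewrite hXd hXb hUd (hN k) mat_diff IH mulmxA exprS.
have hUdiff : forall t, (forall k, N k t) ->
    forall k, Ud k t - Ub k t = K *m (Xd k t - Xb k t).
  by move=> t hN k; rewrite hUd (hN k) mat_diffU.
have [c0 [r [/andP [r0 r1] hb]]] := spec_bound hPr_stab.
pose ka := \sum_i \sum_j `|K i j|.
have hka : forall i j, `|K i j| <= ka.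
  move=> i j; apply: (le_trans (@sum_ge_term _ _ (fun j => `|K i j|) j (fun _ => normr_ge0 _))).
  exact: (@sum_ge_term _ _ (fun i => \sum_j `|K i j|) i (fun _ => sumr_ge0 _ (fun _ _ => normr_ge0 _))).
pose Cst := (1 + (nu * nx ^ 2)%:R * ka ^+ 2) * ((nx * nx ^ 2)%:R * c0 ^+ 2).
have Cst0 : 0 <= Cst.
  have e1 : 0 <= (nu * nx ^ 2)%:R * ka ^+ 2 :> R by apply: mulr_ge0; [exact: ler0n|exact: sqr_ge0].
  have e2 : 0 <= (nx * nx ^ 2)%:R * c0 ^+ 2 :> R by apply: mulr_ge0; [exact: ler0n|exact: sqr_ge0].
  by rewrite /Cst; apply: mulr_ge0 => //; apply: addr_ge0.
pose h0 t := sqnorm (Xini t - Xb 0%N t).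
pose f k t := sqnorm (col_mx (Xd k t - Xb k t) (Ud k t - Ub k t)).
have hfb : forall t, (forall k, N k t) -> forall k, f k t <= Cst * (r ^+ k) ^+ 2 * h0 t.
  move=> t hN k; rewrite /f hUdiff // hpath // sqnorm_col.
  set v := At ^+ k *m _.
  have h1 : sqnorm v <= (nx * nx ^ 2)%:R * (c0 * r ^+ k) ^+ 2 * h0 t.
    exact: sqnorm_mul (fun i j => hb k i j).
  have h2 : sqnorm (K *m v) <= (nu * nx ^ 2)%:R * ka ^+ 2 * sqnorm v.
    exact: sqnorm_mul hka.
  have hv0 := sqnorm_ge0 v.
  have hh0 : 0 <= h0 t := sqnorm_ge0 _.
  apply: (le_trans (lerD (lexx _) h2)).
  rewrite -{1}[sqnorm v]mul1r -mulrDl.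
  apply: (le_trans (ler_wpM2l _ h1)); first by rewrite addr_ge0 // mulr_ge0 ?sqr_ge0.
  by rewrite le_eqVlt; apply/orP; left; apply/eqP; rewrite /Cst exprMn; ring.
have mf : forall k, measurable_fun setT (f k).
  move=> k; apply: meas_sqnorm; apply: cmeas_col; exact: cmeas_sub.
have mh0 : measurable_fun setT h0 by apply: meas_sqnorm; exact: cmeas_sub.
have ih0 : P.-integrable setT (EFin \o h0).
  apply: (le_integrable measurableT _ _ (integrableD measurableT
     (integrableZl measurableT 2 (sq_int_sqnorm hXini))
     (integrableZl measurableT 2 (sq_int_sqnorm (hXbsq 0%N))))).
    by apply/measurable_EFinP.
  move=> t _ /=; have := sqnorm_ge0 (Xini t); have := sqnorm_ge0 (Xb 0%N t) => a1 a2.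
  rewrite lee_fin !ger0_norm ?sqnorm_sub_le ?sqnorm_ge0 //; lra.
have fin0 := integrable_fin_num measurableT ih0.
pose I0 := fine (\int[P]_t (h0 t)%:E).
have I0ge : 0 <= I0 by apply: fine_ge0; apply: integral_ge0 => t _; rewrite lee_fin sqnorm_ge0.
have I0E : (\int[P]_t (h0 t)%:E)%E = I0%:E by rewrite fineK.
split.
  exists (Num.sqrt (Cst * I0 + 1)), r; split.
    by rewrite sqrtr_gt0; have := mulr_ge0 Cst0 I0ge; lra.
  split; first by rewrite r0 r1.
  move=> k.
  have hle := @ae_ge0_le_integral _ _ _ P setT measurableT (fun t => (f k t)%:E)
    (fun t => (Cst * (r ^+ k) ^+ 2 * h0 t)%:E).
  apply: (le_trans (hle _ _ _ _ _)).
  - by move=> t _; rewrite lee_fin sqnorm_ge0.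
  - by apply/measurable_EFinP; exact: mf.
  - move=> t _; rewrite lee_fin; apply: mulr_ge0; [apply: mulr_ge0 => //; exact: sqr_ge0 | exact: sqnorm_ge0].
  - apply/measurable_EFinP; apply: measurable_funM => //; exact: measurable_cst.
  - by apply: filterS hae => t hN _; rewrite lee_fin; exact: hfb.
  under eq_integral do rewrite EFinM.
  rewrite ge0_integralZl_EFin //; last by rewrite mulr_ge0 ?sqr_ge0.
  - rewrite I0E -EFinM lee_fin exprMn sqr_sqrtr; last by have := mulr_ge0 Cst0 I0ge; lra.
    have := sqr_ge0 (r ^+ k); have := mulr_ge0 Cst0 I0ge; nra.
  - by move=> t _; rewrite lee_fin sqnorm_ge0.
  - exact/measurable_EFinP.
move=> eps heps.
case: hae => A0 [mA0 PA0 sA0].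
have mL : measurable (limsup_set (fun k => [set t | eps <= Num.sqrt
          (sqnorm (col_mx (Xd k t - Xb k t) (Ud k t - Ub k t)))])).
  apply: bigcapT_measurable => n; apply: bigcup_measurable => k _.
  exact: meas_ge_sqrt (mf k).
have sub : limsup_set (fun k => [set t | eps <= Num.sqrt
          (sqnorm (col_mx (Xd k t - Xb k t) (Ud k t - Ub k t)))]) `<=` A0.
  move=> t hL; apply: sA0 => /= hN.
  have hr2 : `|r ^+ 2| < 1.
    by rewrite ger0_norm ?exprn_ge0 //; nra.
  have hcv := cvgMr_tmp (b := Cst * h0 t) (cvg_expr hr2).
  have FF : Filter (\oo : set_system nat) by typeclasses eauto.
  move: (hcv FF); rewrite mul0r => {}hcv.
  have := cvgr_lt _ hcv _ (exprn_gt0 2 heps).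
  case => N0 _ hN0.
  have [k hk hEv] := hL N0 I.
  have hu := hN0 k hk; rewrite /= in hu.
  have hfk := hfb t hN k.
  have e2 : eps ^+ 2 <= f k t.
    have hf0 : 0 <= f k t := sqnorm_ge0 _.
    rewrite -(sqr_sqrtr hf0); rewrite /= in hEv.
    by rewrite ler_pXn2r ?nnegrE ?sqrtr_ge0 // ltW.
  rewrite -exprM mulnC exprM in hu.
  have hu' : Cst * r ^+ k ^+ 2 * h0 t < eps ^+ 2 by rewrite [Cst * _]mulrC -mulrA.
  by have := le_lt_trans (le_trans e2 hfk) hu'; rewrite ltxx.
apply/eqP; rewrite eq_le measure_ge0 andbT -PA0.
by apply: le_measure => //; rewrite inE.
Qed.
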